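(* Assume the setting below with general missingness: the $M_i(1),M_i(0)\in\{0,1\}$ are arbitrary constants whose values may depend on the potential outcomes in an arbitrary way. Fix $\boldsymbol\delta\in\mathbb R^n$ and a constant $b\in\mathbb R$, and define $\tilde{\boldsymbol Y}^{\texttt{g}}_{\boldsymbol Z,\boldsymbol\delta,b}(0)\in\overline{\mathbb R}^n$ by $$\tilde Y^{\texttt{g}}_{\boldsymbol Z,\boldsymbol\delta,b,i}(0)=\begin{cases}\min\{Y_i-\delta_i,b\},& Z_i=1,\ M_i=1,\\ -\infty,& Z_i=1,\ M_i=0,\\ Y_i,& Z_i=0,\ M_i=1,\\ b,& Z_i=0,\ M_i=0,\end{cases}\qquad 1\le i\le n.$$ Then $\tilde p^{\texttt{g}}_{\boldsymbol Z,\boldsymbol\delta,b}:=G_{\mathrm R,\phi}\big(t_{\mathrm R,\phi}(\boldsymbol Z,\tilde{\boldsymbol Y}^{\texttt{g}}_{\boldsymbol Z,\boldsymbol\delta,b}(0))\big)$ is a valid p-value for $H_{\boldsymbol\delta}:\boldsymbol\tau=\boldsymbol\delta$: if $H_{\boldsymbol\delta}$ holds then $\mathbb P(\tilde p^{\texttt{g}}_{\boldsymbol Z,\boldsymbol\delta,b}\le\alpha)\le\alpha$ for every $\alpha\in(0,1)$.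
   Context: There are $n$ units. Unit $i$ has fixed potential outcomes $Y_i^\star(0),Y_i^\star(1)\in\mathbb R$ and fixed potential missingness indicators $M_i(0),M_i(1)\in\{0,1\}$; $\tau_i=Y_i^\star(1)-Y_i^\star(0)$, $\boldsymbol\tau=(\tau_1,\dots,\tau_n)^\intercal$. The assignment $\boldsymbol Z\in\{0,1\}^n$ is drawn from a completely randomized experiment (CRE): for fixed positive integers $n_1,n_0$ with $n_1+n_0=n$, $\boldsymbol Z$ is uniform over vectors in $\{0,1\}^n$ with exactly $n_1$ ones, independently of all potential outcomes and missingness indicators; probabilities are over $\boldsymbol Z$. Observed missingness $M_i=Z_iM_i(1)+(1-Z_i)M_i(0)$; the realized outcome $Z_iY_i^\star(1)+(1-Z_i)Y_i^\star(0)$ is observed, and denoted $Y_i$, only when $M_i=1$. Test statistics: $\overline{\mathbb R}=\mathbb R\cup\{\pm\infty\}$; for $1\le i,j\le n$, $y,y'\in\overline{\mathbb R}$, $\psi_{i,j}(y,y')=\mathbf 1\{y>y'\}+\mathbf 1\{y=y'\}\mathbf 1\{i\ge j\}$; $\mathrm{rank}_i(\boldsymbol y)=\sum_{j=1}^n\psi_{i,j}(y_i,y_j)$. $\phi$ is a fixed nondecreasing real function on the nonnegative integers. $t_{\mathrm R,\phi}(\boldsymbol z,\boldsymbol y)$ is either $\sum_i z_i\phi(\mathrm{rank}_i(\boldsymbol y))$ (rank-sum) or $\sum_i z_i\phi\big(\sum_j(1-z_j)\psi_{i,j}(y_i,y_j)\big)$ (Mann–Whitney type); the result holds for either. $G_{\mathrm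 R,\phi}(c)=\mathbb P(t_{\mathrm R,\phi}(\boldsymbol A,\boldsymbol y_0)\ge c)$ with $\boldsymbol A$ from the CRE and $\boldsymbol y_0\in\mathbb R^n$ any fixed vector (independent of the choice of $\boldsymbol y_0$). *)

(* Defs.v *)
From HB Require Import structures.
From mathcomp Require Import all_boot all_order all_algebra.
From mathcomp Require Import reals constructive_ereal.
Set Implicit Arguments. Unset Strict Implicit. Unset Printing Implicit Defensive.
Import Order.TTheory GRing.Theory Num.Theory.
Local Open Scope ring_scope.

(* Assignments: z : {ffun 'I_n -> bool}; z i = true means Z_i = 1. *)
Definition assignment (n : nat) := {ffun 'I_n -> bool}.

(* Support of the completely randomized experiment with n1 treated units. *)
Definition cre (n n1 : nat) : {set assignment n} :=
  [set z : assignment n | #|[set i | z i]| == n1].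

Definition cre_prob (R : realType) (n n1 : nat) (E : pred (assignment n)) : R :=
  #|[set z in cre n n1 | E z]|%:R / #|cre n n1|%:R.

Definition psi (R : realType) (n : nat) (i j : 'I_n) (y y' : \bar R) : nat :=
  ((y' < y)%E : nat) + ((y == y') && (j <= i)%N : nat).

Definition rank (R : realType) (n : nat) (y : 'I_n -> \bar R) (i : 'I_n) : nat :=
  (\sum_(j < n) psi i j (y i) (y j))%N.

Inductive stat_kind := RankSum | MannWhitney.

Definition tstat (R : realType) (n : nat) (k : stat_kind) (phi : nat -> R)
    (z : assignment n) (y : 'I_n -> \bar R) : R :=
  \sum_(i < n | z i)
    phi (match k with
         | RankSum => rank y i
         | MannWhitney => (\sum_(j < n | ~~ z j) psi i j (y i) (y j))%N
         end).

Definition Gtail (R : realType) (n n1 : nat) (k : stat_kind) (phi : nat -> R)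
    (y0 : 'I_n -> R) (c : R) : R :=
  cre_prob R n1 (fun a => c <= tstat k phi a (fun i => (y0 i)%:E)).

Definition Ytilde (R : realType) (n : nat) (Y1 Y0 : 'I_n -> R) (M1 M0 : 'I_n -> bool)
    (delta : 'I_n -> R) (b : R) (z : assignment n) : 'I_n -> \bar R :=
  fun i =>
    let Mi := if z i then M1 i else M0 i in
    let Yi := if z i then Y1 i else Y0 i in
    if z i then (if Mi then (Num.min (Yi - delta i) b)%:E else -oo%E)
    else (if Mi then Yi%:E else b%:E).

(* Main.v *)
Require Import Defs.
From HB Require Import structures.
From mathcomp Require Import all_boot all_order all_algebra all_fingroup.
From mathcomp Require Import reals constructive_ereal.
From mathcomp Require Import zify.
Set Implicit Arguments. Unset Strict Implicit. Unset Printing Implicit Defensive.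
Import Order.TTheory GRing.Theory Num.Theory.
Local Open Scope ring_scope.

Section Ranks.
Variables (R : realType) (n : nat).
Implicit Types (y : 'I_n -> \bar R) (i j k : 'I_n).

Definition Pb y i j : bool := (y j < y i)%E || ((y i == y j) && (j <= i)%N).

Lemma psiE y i j : psi i j (y i) (y j) = Pb y i j.
Proof.
by rewrite /psi /Pb; case: (ltgtP (y j) (y i)).
Qed.

Lemma Pb_refl y i : Pb y i i.
Proof. by rewrite /Pb eqxx leqnn orbT. Qed.

Lemma Pb_tot y i j : i != j -> Pb y i j = ~~ Pb y j i.
Proof.
move=> ne; rewrite /Pb; case: (ltgtP (y j) (y i)) => //= h.
move: ne; rewrite -val_eqE /= => ne; lia.
Qed.

Lemma Pb_trans y i j k : Pb y i j -> Pb y j k -> Pb y i k.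
Proof.
rewrite /Pb => /orP[h1|/andP[/eqP e1 h1]] /orP[h2|/andP[/eqP e2 h2]].
- by rewrite (lt_trans h2 h1).
- by rewrite -e2 h1.
- by rewrite e1 h2.
- by rewrite e1 e2 eqxx (leq_trans h2 h1) orbT.
Qed.

Lemma rankE y i : rank y i = #|[set j | Pb y i j]|.
Proof.
rewrite /rank -sum1_card [RHS]big_mkcond /=; apply: eq_bigr => j _.
by rewrite psiE inE; case: (Pb y i j).
Qed.

Lemma rank_lt y i j : Pb y i j -> i != j -> (rank y j < rank y i)%N.
Proof.
move=> h ne; rewrite !rankE; apply: proper_card; apply/properP; split.
  apply/subsetP => k; rewrite !inE => hk; exact: Pb_trans h hk.
exists i; rewrite !inE ?Pb_refl //.
by rewrite (Pb_tot y (i:=j) (j:=i)) ?h // eq_sym.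
Qed.

Lemma PbE y i j : Pb y i j = (rank y j <= rank y i)%N.
Proof.
case: (eqVneq i j) => [->|ne]; first by rewrite Pb_refl leqnn.
case h: (Pb y i j); first by rewrite ltnW // rank_lt.
have h2 : Pb y j i by rewrite Pb_tot 1?eq_sym // h.
by apply/esym/negbTE; rewrite -ltnNge rank_lt // eq_sym.
Qed.

Lemma rank_ge1 y i : (0 < rank y i)%N.
Proof. by rewrite rankE; apply/card_gt0P; exists i; rewrite inE Pb_refl. Qed.

Lemma rank_len y i : (rank y i <= n)%N.
Proof. by rewrite rankE; apply: leq_trans (max_card _) _; rewrite card_ord. Qed.

Lemma rk_lt y i : ((rank y i).-1 < n)%N.
Proof. have := rank_ge1 y i; have := rank_len y i; lia. Qed.

Definition rk y i : 'I_n := Ordinal (rk_lt y i).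

Lemma PbE' y i j : Pb y i j = (rk y j <= rk y i)%N.
Proof. by rewrite PbE /=; have := rank_ge1 y i; have := rank_ge1 y j; lia. Qed.

Lemma rk_inj y : injective (rk y).
Proof.
move=> i j e; apply/eqP; apply/negPn/negP => ne.
have := Pb_tot y ne; rewrite !PbE' e leqnn //.
Qed.

Definition sg y : {perm 'I_n} := perm (@rk_inj y).

End Ranks.
Section Canon.
Variables (R : realType) (n : nat) (k : stat_kind) (phi : nat -> R).

Definition tcan (b : assignment n) : R :=
  \sum_(i < n | b i) phi (match k with
     | RankSum => i.+1
     | MannWhitney => (\sum_(j < n | ~~ b j) ((j <= i)%N : nat))%N end).

Definition relab (y : 'I_n -> \bar R) (z : assignment n) : assignment n :=
  [ffun i => z ((sg y)^-1%g i)].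

Lemma rk_sgV (y : 'I_n -> \bar R) i : rk y ((sg y)^-1%g i) = i.
Proof.
have -> : forall x, rk y x = sg y x by move=> x; rewrite /sg permE.
exact: permKV.
Qed.

Lemma tstat_can (y : 'I_n -> \bar R) z : tstat k phi z y = tcan (relab y z).
Proof.
rewrite /tstat /tcan (reindex_inj (@perm_inj _ (sg y)^-1%g)).
apply: eq_big => [i|i _]; first by rewrite /relab ffunE.
congr phi; case: k.
  by rewrite -[in RHS](rk_sgV y i) /= prednK // rank_ge1.
rewrite (reindex_inj (@perm_inj _ (sg y)^-1%g)).
apply: eq_big => [j|j _]; first by rewrite /relab ffunE.
by rewrite psiE PbE' !rk_sgV.
Qed.

Lemma relab_inj y : injective (relab y).
Proof.
move=> z1 z2 e; apply/ffunP => i.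
have := congr1 (fun f : assignment n => f (sg y i)) e.
by rewrite /relab !ffunE permK.
Qed.

Lemma relab_cre y n1 z : (relab y z \in cre n n1) = (z \in cre n n1).
Proof.
rewrite /cre !inE.
have -> : [set i | relab y z i] = (sg y)^-1%g @^-1: [set i | z i].
  by apply/setP => i; rewrite !inE /relab ffunE.
by rewrite card_preimset //; apply: perm_inj.
Qed.

Lemma count_can y n1 (c : R) :
  #|[set z in cre n n1 | c <= tstat k phi z y]| =
  #|[set b in cre n n1 | c <= tcan b]|.
Proof.
rewrite -[RHS](card_preimset _ (@relab_inj y)); apply: eq_card => z.
have := relab_cre y n1 z; rewrite !inE => ->; by rewrite tstat_can.
Qed.

End Canon.
Lemma prob_mono (R : realType) n n1 (E E' : pred (assignment n)) :
  (forall z, z \in cre n n1 -> E z -> E' z) ->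
  cre_prob R n1 E <= cre_prob R n1 E'.
Proof.
move=> H; rewrite /cre_prob ler_wpM2r ?invr_ge0 ?ler0n // ler_nat.
apply: subset_leq_card; apply/subsetP => z.
have {}H := H z; rewrite !inE in H *.
by move=> /andP[h1 h2]; rewrite h1 H.
Qed.

Lemma valid (R : realType) n n1 (T : assignment n -> R) (G : R -> R) (alpha : R) :
  0 <= alpha -> (forall c, G c = cre_prob R n1 (fun a => c <= T a)) ->
  cre_prob R n1 (fun z => G (T z) <= alpha) <= alpha.
Proof.
move=> a0 HG.
pose P := fun z => (z \in cre n n1) && (G (T z) <= alpha).
case: (pickP P) => [z0 Pz0|none].
  case: (@arg_minP _ _ _ z0 P T Pz0) => zs /andP[_ hs] hmin.
  apply: le_trans (_ : cre_prob R n1 (fun a => T zs <= T a) <= alpha); last by rewrite -HG.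
  by apply: prob_mono => z hz hE; apply: hmin; rewrite /P hz hE.
rewrite /cre_prob.
have -> : [set z in cre n n1 | G (T z) <= alpha] = set0.
  by apply/setP => z; rewrite [RHS]inE in_set; have := none z; rewrite /P => ->.
by rewrite cards0 mul0r.
Qed.

Lemma psiE' (R : realType) n (i j : 'I_n) (a x : \bar R) :
  psi i j a x = ((x < a)%E || ((a == x) && (j <= i)%N)).
Proof. by rewrite /psi; case: (ltgtP x a). Qed.

Lemma psi_mono (R : realType) n (i j : 'I_n) (a x x' : \bar R) :
  (x' <= x)%E -> (psi i j a x <= psi i j a x')%N.
Proof.
move=> hx; rewrite !psiE'.
case: ((x < a)%E || ((a == x) && (j <= i)%N)) / orP => [[h|/andP[/eqP e h]]|//].
  by rewrite (le_lt_trans hx h).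
rewrite -e in hx; move: hx; rewrite le_eqVlt => /orP[/eqP->|->//].
by rewrite eqxx h orbT.
Qed.

Theorem theorem2 (R : realType) (n n1 n0 : nat)
    (hn1 : (0 < n1)%N) (hn0 : (0 < n0)%N) (hn : (n1 + n0)%N = n)
    (k : stat_kind) (phi : nat -> R)
    (hphi : forall a c : nat, (a <= c)%N -> phi a <= phi c)
    (y0 : 'I_n -> R)
    (Y1 Y0 : 'I_n -> R) (M1 M0 : 'I_n -> bool)
    (delta : 'I_n -> R) (b : R)
    (Hnull : forall i : 'I_n, Y1 i - Y0 i = delta i)
    (alpha : R) (halpha0 : 0 < alpha) (halpha1 : alpha < 1) :
  cre_prob R n1 (fun z : assignment n =>
    Gtail n1 k phi y0 (tstat k phi z (Ytilde Y1 Y0 M1 M0 delta b z)) <= alpha)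
  <= alpha.
Proof.
pose u := fun i => if M1 i then (Num.min (Y0 i) b)%:E else -oo%E.
pose U := fun z => tstat k phi z u.
have hY : forall i, Y1 i - delta i = Y0 i.
  by move=> i; rewrite -Hnull opprB addrC subrK.
have Heq : forall (z : assignment n) (i : 'I_n), z i -> Ytilde Y1 Y0 M1 M0 delta b z i = u i.
  by move=> z i zi; rewrite /Ytilde /u zi hY.
have Hle : forall (z : assignment n) (j : 'I_n), (u j <= Ytilde Y1 Y0 M1 M0 delta b z j)%E.
  move=> z j; rewrite /Ytilde /u; case: (z j); rewrite ?hY;
    case: (M1 j); case: (M0 j); rewrite ?lexx ?lee_fin ?ge_min ?lexx ?orbT ?leNye //.
have Step1 : forall z, tstat k phi z (Ytilde Y1 Y0 M1 M0 delta b z) <= U z.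
  move=> z; rewrite /U /tstat; apply: ler_sum => i zi; apply: hphi.
  case: (k); [rewrite /rank|]; apply: leq_sum => j _; rewrite (Heq z i zi);
    exact: psi_mono.
have Gmono : forall c c', c <= c' -> Gtail n1 k phi y0 c' <= Gtail n1 k phi y0 c.
  move=> c c' hc; apply: prob_mono => z _; exact: le_trans.
have HG : forall c, Gtail n1 k phi y0 c = cre_prob R n1 (fun a => c <= U a).
  by move=> c; rewrite /Gtail /cre_prob /U !count_can.
apply: le_trans (valid (ltW halpha0) HG).
apply: prob_mono => z _ h; exact: le_trans (Gmono _ _ (Step1 z)) h.
Qed.
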